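(* Let $N\ge 2$ and let $A_1,\dots,A_N$ be distinct Boolean variables. Then $$A_1\wedge A_2\wedge\dots\wedge A_{N-1}\wedge A_N=(A_1<1)<((A_2<1)<\cdots((A_{N-1}<1)<A_N)\cdots)$$ as Boolean functions, and this right-hand side, which contains exactly $N-1$ occurrences of the constant $1$ and exactly one occurrence of each variable $A_i$, is a minimal $(<,1)$-representation of $A_1\wedge\dots\wedge A_N$, i.e. no $(<,1)$-expression representing $A_1\wedge\dots\wedge A_N$ uses fewer occurrences of the operation $<$.
   Context: The binary Boolean operation $<$ (Strict Boolean Inequality) is defined by $A<B=(\neg A)\wedge B$, i.e. $A<B=1$ iff $A=0$ and $B=1$. A $(<,1)$-representation (or $(<,1)$-expression) of a Boolean function of variables $A_1,\dots,A_N$ is a formula built from the variables $A_1,\dots,A_N$ and the constant $1$ using only the binary operation $<$, which computes that function; its cost is the number of occurrences of $<$ (number of gates), and a representation is minimal if no representation of the same function has smaller cost. *)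

(* Defs.v *)
From mathcomp Require Import all_boot.
Set Implicit Arguments. Unset Strict Implicit. Unset Printing Implicit Defensive.

(* (<,1)-expressions over the variables A_1..A_N, indexed by 'I_N
   (variable A_{i+1} is Var i). *)
Inductive form (N : nat) : Type :=
| Var of 'I_N
| One
| Lt of form N & form N.
Arguments One {N}.

Definition sbi (a b : bool) : bool := ~~ a && b.

Fixpoint eval N (v : 'I_N -> bool) (f : form N) : bool :=
  match f with
  | Var i => v i
  | One => true
  | Lt f g => sbi (eval v f) (eval v g)
  end.

Fixpoint cost N (f : form N) : nat :=
  match f with
  | Var _ => 0
  | One => 0
  | Lt f g => (cost f + cost g).+1
  end.

Fixpoint count_one N (f : form N) : nat :=
  match f with
  | Var _ => 0
  | One => 1
  | Lt f g => count_one f + count_one g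
  end.

Fixpoint count_var N (i : 'I_N) (f : form N) : nat :=
  match f with
  | Var j => (j == i)
  | One => 0
  | Lt f g => count_var i f + count_var i g
  end.

(* variable with nat index i (A_{i+1}); only used with i < N *)
Definition V N (i : nat) : form N :=
  match @insub _ (fun k => k < N) _ i with Some j => Var j | None => One end.

Fixpoint chainF N (i k : nat) : form N :=
  match k with
  | 0 => V N i
  | k'.+1 => Lt (Lt (V N i) One) (chainF N i.+1 k')
  end.

Definition rhs N : form N := chainF N 0 N.-1.

(* Main.v *)
Require Import Defs.
From mathcomp Require Import all_boot.
From mathcomp Require Import zify.

Set Implicit Arguments. Unset Strict Implicit. Unset Printing Implicit Defensive.

Lemma V_lt N j (h : j < N) : V N j = Var (Ordinal h).
Proof.
rewrite /V; case: insubP => [u _ Hu|]; last by rewrite h.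
by congr Var; apply: val_inj.
Qed.

Lemma eval_chain N (v : 'I_N -> bool) k i :
  eval v (chainF N i k) = \big[andb/true]_(i <= j < i + k.+1) eval v (V N j).
Proof.
elim: k i => [|k IH] i /=.
  by rewrite addn1 big_nat1.
rewrite IH big_add1 /=.
have -> : i + k.+2 = (i + k.+1).+1 by lia.
rewrite [RHS]big_nat_recl; last lia.
by rewrite /sbi /= andbT negbK addnS.
Qed.

Lemma count_one_chain N k i : i + k < N -> count_one (chainF N i k) = k.
Proof.
elim: k i => [|k IH] i /= h.
  by rewrite addn0 in h; rewrite (V_lt h).
have hi : i < N by lia.
rewrite (V_lt hi) IH //=; lia.
Qed.

Lemma count_var_chain N (x : 'I_N) k i : i + k < N ->
  count_var x (chainF N i k) = ((i <= x) && (x <= i + k)).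
Proof.
elim: k i => [|k IH] i /= h.
  rewrite addn0 in h; rewrite (V_lt h) /= addn0 -eqn_leq.
  by rewrite -(inj_eq val_inj) /= eq_sym.
have hi : i < N by lia.
rewrite (V_lt hi) IH /=; last lia.
rewrite -(inj_eq val_inj) /=.
case: (ltngtP i x) => H /=.
- by rewrite addSnnS.
- by [].
- by move: H => ->; rewrite leq_addr.
Qed.

Lemma cost_chain N k i : cost (chainF N i k) = k.*2.
Proof.
elim: k i => [|k IH] i /=.
  by rewrite /V; case: insub.
rewrite IH. have -> : cost (V N i) = 0 by rewrite /V; case: insub.
lia.
Qed.

Definition allT N : 'I_N -> bool := fun _ => true.
Definition flip N (x : 'I_N) : 'I_N -> bool := fun j => j != x.

Definition sens N (f : form N) : {set 'I_N} :=
  [set x | eval (flip x) f != eval (@allT N) f].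

Lemma card_sub N (A B : {set 'I_N}) : A \subset B -> #|A| <= #|B|.
Proof. exact: subset_leq_card. Qed.

Lemma lower N (f : form N) :
  2 * #|sens f| + ~~ eval (@allT N) f <= cost f + 2.
Proof.
elim: f => [i||g IHg h IHh] /=.
- have -> : sens (Var i) = [set i].
    by apply/setP=> x; rewrite !inE /flip /allT /= (eq_sym i x); case: (x == i).
  by rewrite cards1.
- have -> : sens (@One N) = set0 by apply/setP=> x; rewrite !inE.
  by rewrite cards0.
- rewrite /sbi.
  case E1: (eval (@allT N) g) IHg => IHg; case E2: (eval (@allT N) h) IHh => IHh /=; rewrite /= in IHg IHh.
  +
    have S : sens (Lt g h) \subset sens g.
      apply/subsetP=> x; rewrite !inE /= /sbi E1 E2.
      by case: (eval (flip x) g).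
    move: IHg IHh (card_sub S).
    move: #|sens (Lt g h)| #|sens g| #|sens h| => a b c; lia.
  +
    have S : sens (Lt g h) \subset sens g :&: sens h.
      apply/subsetP=> x; rewrite !inE /= /sbi E1 E2.
      by case: (eval (flip x) g); case: (eval (flip x) h).
    move: IHg IHh (card_sub S) (card_sub (subsetIl (sens g) (sens h))) (card_sub (subsetIr (sens g) (sens h))).
    move: #|sens (Lt g h)| #|sens g| #|sens h| #|sens g :&: sens h| => a b c d; lia.
  +
    have S : sens (Lt g h) \subset sens g :|: sens h.
      apply/subsetP=> x; rewrite !inE /= /sbi E1 E2.
      by case: (eval (flip x) g); case: (eval (flip x) h).
    move: IHg IHh (card_sub S) (cardsU (sens g) (sens h)).
    move: #|sens (Lt g h)| #|sens g| #|sens h| #|sens g :&: sens h| #|sens g :|: sens h| => a b c d e; lia.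
  +
    have S : sens (Lt g h) \subset sens h.
      apply/subsetP=> x; rewrite !inE /= /sbi E1 E2.
      by case: (eval (flip x) g); case: (eval (flip x) h).
    move: IHg IHh (card_sub S).
    move: #|sens (Lt g h)| #|sens g| #|sens h| => a b c; lia.
Qed.

Theorem mainTheorem4 (N : nat) (hN : 2 <= N) :
  (forall v : 'I_N -> bool, eval v (rhs N) = \big[andb/true]_(i < N) v i) /\
  count_one (rhs N) = N.-1 /\
  (forall i : 'I_N, count_var i (rhs N) = 1) /\
  (forall f : form N,
     (forall v : 'I_N -> bool, eval v f = \big[andb/true]_(i < N) v i) ->
     cost (rhs N) <= cost f).
Proof.
have hk : 0 + N.-1 < N by lia.
split; [|split; [|split]].
- move=> v; rewrite /rhs eval_chain add0n prednK; last lia.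
  rewrite big_mkord; apply: eq_bigr => i _.
  by rewrite (V_lt (ltn_ord i)); congr (v _); apply: val_inj.
- by rewrite /rhs count_one_chain.
- move=> i; rewrite /rhs count_var_chain //= add0n.
  have := ltn_ord i; lia.
- move=> f Hf; rewrite /rhs cost_chain.
  have L := lower f.
  have A1 : eval (@allT N) f = true by rewrite Hf big1.
  have S : sens f = setT.
    by apply/setP=> x; rewrite !inE Hf A1 (bigD1 x) //= /flip eqxx.
  rewrite A1 S cardsT card_ord /= in L.
  lia.
Qed.
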